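(* Let $X$ be a topological space and $x\in X$. Then $\mathrm{cl}_\theta(\{x\})$ is a finitely non-Urysohn subset of $X$ that contains $x$.
   Context: For $A\subseteq X$, $\mathrm{cl}_\theta(A):=\{y\in X:\ \overline{B}\cap A\neq\emptyset$ for every open neighborhood $B$ of $y\}$. A non-empty subset $A$ of $X$ is finitely non-Urysohn if for every non-empty finite $F\subseteq A$ and every family $\{U_y:y\in F\}$ of open neighborhoods $U_y$ of $y$, $\bigcap_{y\in F}\overline{U_y}\neq\emptyset$. *)

(* Defs.v *)
From HB Require Import structures.
From mathcomp Require Import all_boot all_order.
From mathcomp Require Import all_classical topology.
Set Implicit Arguments. Unset Strict Implicit. Unset Printing Implicit Defensive.
Local Open Scope classical_set_scope.

Definition theta_closure (X : topologicalType) (A : set X) : set X :=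
  [set y | forall B : set X, open B -> B y -> closure B `&` A !=set0].

Definition finitely_non_Urysohn (X : topologicalType) (A : set X) : Prop :=
  A !=set0 /\
  forall (F : set X), finite_set F -> F !=set0 -> F `<=` A ->
  forall U : X -> set X, (forall y, F y -> open (U y) /\ U y y) ->
  \bigcap_(y in F) closure (U y) !=set0.

(* Main.v *)
Require Import Defs.
From HB Require Import structures.
From mathcomp Require Import all_boot all_order.
From mathcomp Require Import all_classical topology.
Local Open Scope classical_set_scope.

Lemma thcl_x (X : topologicalType) (x y : X) (B : set X) :
  theta_closure [set x] y -> open B -> B y -> closure B x.
Proof.
move=> H oB By; have [z [cz zx]] := H B oB By.
by rewrite -zx.
Qed.

Lemma thcl_self (X : topologicalType) (x : X) : theta_closure [set x] x.
Proof.
move=> B oB Bx; exists x; split => //.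
exact: subset_closure.
Qed.

Theorem corollary2p17 (X : topologicalType) (x : X) :
  finitely_non_Urysohn (theta_closure [set x]) /\ theta_closure [set x] x.
Proof.
split; last exact: thcl_self.
split; first by exists x; exact: thcl_self.
move=> F _ _ FA U HU; exists x => y Fy.
have [oU Uy] := HU y Fy.
apply: thcl_x oU Uy; exact: FA.
Qed.
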